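(* Let $m\in\mathbb{N}\setminus\{1\}$, let $0<p<q\leq\infty$ and put $\alpha=1/p-1/q$. For each $i\in\{1,\dots,m\}$ let $X_{i},Y_{i}$ be quasi-Banach spaces and $T_{i}:X_i\to Y_i$ a bounded linear operator. Suppose that $e_{s}(T_{i})\leq (m/s)^{\alpha}$ for all $i,s\in\{1,\dots,m\}$. Let $T:l_{p}^{m}(\{X_{i}\}_{i=1}^m)\rightarrow l_{q}^{m}(\{Y_{i}\}_{i=1}^m)$ be the linear operator $T(x)=(T_{1}(x_{1}),\dots,T_{m}(x_{m}))$ for $x=(x_{1},\dots,x_{m})\in X_1\times\dots\times X_m$. Then $e_{5m}(T)\leq 3^{1/q}$.
   Context: For quasi-Banach spaces $X_1,\dots,X_m$ and $0<p\le\infty$, $l_p^m(\{X_i\}_{i=1}^m)$ is the space of tuples $x=(x_1,\dots,x_m)$, $x_i\in X_i$, with quasi-norm $(\sum_{i=1}^m\|x_i\|_{X_i}^p)^{1/p}$ (and $\max_i\|x_i\|_{X_i}$ if $p=\infty$). For a bounded linear operator $S:X\to Y$ between quasi-Banach spaces and $n\in\mathbb{N}$, the entropy number $e_n(S)$ is the infimum of $\varepsilon>0$ such that $S(B_X)$ ($B_X$ the closed unit ball of $X$) can be covered by $2^{n-1}$ balls in $Y$ of radius $\varepsilon$. Convention $3^{1/\infty}=1$. *)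

(* Defs.v *)
From HB Require Import structures.
From mathcomp Require Import all_boot all_order all_algebra.
From mathcomp Require Import all_classical all_reals.
From mathcomp Require Import exp.
Set Implicit Arguments. Unset Strict Implicit. Unset Printing Implicit Defensive.
Import Order.TTheory GRing.Theory Num.Theory.
Local Open Scope ring_scope.
Local Open Scope classical_set_scope.

Section QB.
Variable R : realType.

Definition is_quasinorm (X : lmodType R) (nX : X -> R) : Prop :=
  [/\ forall x, 0 <= nX x,
      forall x, nX x = 0 <-> x = 0,
      forall (a : R) x, nX (a *: x) = `|a| * nX x
    & exists C : R, 1 <= C /\ forall x y, nX (x + y) <= C * (nX x + nX y)].

Definition qn_complete (X : lmodType R) (nX : X -> R) : Prop :=
  forall u : nat -> X,
    (forall eps : R, 0 < eps -> exists N, forall k l, (N <= k)%N -> (N <= l)%N ->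
        nX (u k - u l) < eps) ->
    exists x, forall eps : R, 0 < eps -> exists N, forall k, (N <= k)%N ->
        nX (u k - x) < eps.

Definition is_quasi_banach (X : lmodType R) (nX : X -> R) : Prop :=
  is_quasinorm nX /\ qn_complete nX.

Definition bounded_op (X Y : lmodType R) (nX : X -> R) (nY : Y -> R)
  (S : {linear X -> Y}) : Prop :=
  exists C : R, forall x, nY (S x) <= C * nX x.

Definition entropy_number (X Y : lmodType R) (nX : X -> R) (nY : Y -> R)
  (S : X -> Y) (n : nat) : R :=
  inf [set eps : R | 0 < eps /\
        exists c : 'I_(2 ^ (n.-1)) -> Y,
          forall x, nX x <= 1 -> exists j, nY (S x - c j) <= eps].

Definition dprod (m : nat) (X : 'I_m -> lmodType R) := forall i, X i.

Section Dprod.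
Variables (m : nat) (X : 'I_m -> lmodType R).
HB.instance Definition _ := gen_eqMixin (dprod X).
HB.instance Definition _ := gen_choiceMixin (dprod X).
Definition dp_zero : dprod X := fun i => 0.
Definition dp_add (x y : dprod X) : dprod X := fun i => x i + y i.
Definition dp_opp (x : dprod X) : dprod X := fun i => - x i.
Definition dp_scale (a : R) (x : dprod X) : dprod X := fun i => a *: x i.
Lemma dp_addA : associative dp_add.
Proof. by move=> x y z; apply: functional_extensionality_dep => i; rewrite /dp_add addrA. Qed.
Lemma dp_addC : commutative dp_add.
Proof. by move=> x y; apply: functional_extensionality_dep => i; rewrite /dp_add addrC. Qed.
Lemma dp_add0 : left_id dp_zero dp_add.
Proof. by move=> x; apply: functional_extensionality_dep => i; rewrite /dp_add add0r. Qed.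
Lemma dp_addN : left_inverse dp_zero dp_opp dp_add.
Proof. by move=> x; apply: functional_extensionality_dep => i; rewrite /dp_add addNr. Qed.
HB.instance Definition _ := GRing.isZmodule.Build (dprod X) dp_addA dp_addC dp_add0 dp_addN.
Lemma dp_scaleA a b (x : dprod X) : dp_scale a (dp_scale b x) = dp_scale (a * b) x.
Proof. by apply: functional_extensionality_dep => i; rewrite /dp_scale scalerA. Qed.
Lemma dp_scale1 : left_id 1 dp_scale.
Proof. by move=> x; apply: functional_extensionality_dep => i; rewrite /dp_scale scale1r. Qed.
Lemma dp_scaleDr : right_distributive dp_scale (@GRing.add (dprod X)).
Proof. by move=> a x y; apply: functional_extensionality_dep => i; rewrite /dp_scale scalerDr. Qed.
Lemma dp_scaleDl (x : dprod X) : {morph dp_scale^~ x : a b / a + b}.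
Proof. by move=> a b; apply: functional_extensionality_dep => i; rewrite /dp_scale scalerDl. Qed.
HB.instance Definition _ := GRing.Zmodule_isLmodule.Build R (dprod X)
  dp_scaleA dp_scale1 dp_scaleDr dp_scaleDl.
End Dprod.

Definition exp_inv (r : \bar R) : R :=
  match r with EFin s => s^-1 | _ => 0 end.

Definition lsum (m : nat) (r : \bar R) (f : 'I_m -> R) : R :=
  match r with
  | EFin s => (\sum_(i < m) f i `^ s) `^ s^-1
  | _ => \big[Num.max/0]_(i < m) f i
  end.

Definition lp_norm (m : nat) (X : 'I_m -> lmodType R) (nX : forall i, X i -> R)
  (r : \bar R) (x : dprod X) : R := lsum r (fun i => nX i (x i)).

Definition diag_op (m : nat) (X Y : 'I_m -> lmodType R)
  (T : forall i, {linear X i -> Y i}) (x : dprod X) : dprod Y :=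
  fun i => T i (x i).

End QB.

(* Main.v *)
Require Import Defs.
From HB Require Import structures.
From mathcomp Require Import all_boot all_order all_algebra.
From mathcomp Require Import all_classical all_reals.
From mathcomp Require Import exp.
From mathcomp Require Import zify lra.
Import Order.TTheory GRing.Theory Num.Theory.

Fixpoint Ls (n bud : nat) : seq (seq (nat * nat)) :=
  match n with
  | 0 => [:: [::]]
  | n'.+1 =>
     [seq (0, 0) :: s | s <- Ls n' bud] ++
     flatten [seq flatten [seq [seq (j.+1, b) :: s | s <- Ls n' (bud - j)]
                          | b <- iota 0 (2 ^ j)]
             | j <- iota 0 bud.+1]
  end.

Lemma geo_inv (N k : nat) : k <= N ->
  \sum_(j < k) 2 ^ j * 4 ^ (N - j) + 2 * (2 ^ k * 4 ^ (N - k)) = 2 * 4 ^ N.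
Proof.
elim: k => [|k IH] hk; first by rewrite big_ord0 subn0 expn0 mul1n.
rewrite big_ord_recr /= -addnA -IH; last by lia.
congr (_ + _).
have -> : N - k = (N - k.+1).+1 by lia.
rewrite !expnS; lia.
Qed.

Lemma geo_tot (N k : nat) : k <= N ->
  \sum_(j < k.+1) 2 ^ j * 4 ^ (N - j) <= 2 * 4 ^ N.
Proof.
move=> hk; rewrite -(@geo_inv N k hk) big_ord_recr /=.
by rewrite leq_add2l leq_pmull.
Qed.

Lemma size_flatten_map (T U : Type) (f : T -> seq U) (l : seq T) :
  size (flatten (map f l)) = \sum_(x <- l) size (f x).
Proof.
elim: l => [|x l IH]; first by rewrite big_nil.
by rewrite /= size_cat big_cons IH.
Qed.

Lemma Ls_S n bud : Ls n.+1 bud =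
     [seq (0, 0) :: s | s <- Ls n bud] ++
     flatten [seq flatten [seq [seq (j.+1, b) :: s | s <- Ls n (bud - j)]
                          | b <- iota 0 (2 ^ j)]
             | j <- iota 0 bud.+1].
Proof. by []. Qed.

Lemma size_Ls n bud : size (Ls n bud) <= 4 ^ (n + bud).
Proof.
elim: n bud => [|n IH] bud.
  by rewrite add0n expn_gt0.
rewrite Ls_S size_cat size_map size_flatten_map.
have H1 : \sum_(j <- iota 0 bud.+1)
   size (flatten [seq [seq (j.+1, b) :: s | s <- Ls n (bud - j)]
                          | b <- iota 0 (2 ^ j)])
   <= \sum_(j < bud.+1) 2 ^ j * 4 ^ (n + bud - j).
  rewrite -(big_mkord xpredT (fun j => 2 ^ j * 4 ^ (n + bud - j))) /index_iota subn0.
  rewrite !big_seq; apply: leq_sum => j; rewrite mem_iota add0n => /andP [_ hj].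
  rewrite size_flatten_map.
  under eq_bigr do rewrite size_map.
  rewrite big_const_seq count_predT size_iota iter_addn_0 mulnC.
  apply: leq_mul => //.
  have -> : n + bud - j = n + (bud - j) by lia.
  exact: IH.
have H2 := @geo_tot (n + bud) bud (leq_addl _ _).

have H3 := IH bud.
have -> : n.+1 + bud = (n + bud).+1 by lia.
rewrite expnS.
lia.
Qed.

Definition good (x : nat * nat) := (x == (0, 0)) || ((0 < x.1) && (x.2 < 2 ^ x.1.-1)).

Lemma mem_Ls (s : seq (nat * nat)) bud :
  all good s -> sumn [seq x.1.-1 | x <- s] <= bud -> s \in Ls (size s) bud.
Proof.
elim: s bud => [|x s IH] bud; first by rewrite inE.
move=> /andP [gx gs] hsum; change (x :: s \in Ls (size s).+1 bud).
rewrite Ls_S mem_cat.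
case/orP: gx => [/eqP -> | /andP [k0 kb]].
  apply/orP; left; apply: map_f; apply: IH => //; move: hsum => /=; lia.
apply/orP; right.
case: x k0 kb hsum => k b k0 kb hsum; rewrite /= in k0 kb hsum.
apply/flatten_mapP; exists k.-1.
  rewrite mem_iota; lia.
apply/flatten_mapP; exists b.
  rewrite mem_iota; lia.
have -> : k = k.-1.+1 by lia.
apply: map_f; apply: IH => //; lia.
Qed.

Local Open Scope ring_scope.
Section A.
Local Open Scope classical_set_scope.
Variable R : realType.
Lemma inf_le_elem (S : set R) e : (forall y, S y -> 0 <= y) -> S e -> inf S <= e.
Proof.
move=> h Se; have hl : has_lbound S by exists 0 => y /h.
exact: (ge_inf hl).
Qed.

Lemma inf_le_B (S : set R) (B : R) : (forall y, S y -> 0 <= y) -> 0 < B ->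
  (forall d, 0 < d -> exists e, S e /\ e <= (1 + d) * B) -> inf S <= B.
Proof.
move=> h hB H; apply/ler_addgt0Pr => eps he.
have [e [Se le]] := H (eps / B) (divr_gt0 he hB).
have h1 := @inf_le_elem S e h Se.
have h2 : (1 + eps / B) * B = B + eps.
  by rewrite mulrDl mul1r mulrVK // unitfE gt_eqF.
lra.
Qed.

Lemma cover_of (X Y : lmodType R) (nX : X -> R) (nY : Y -> R) (T : {linear X -> Y})
  (hX : forall x, 0 <= nX x) (hT : bounded_op nX nY T) (s : nat) (a d : R) :
  0 < a -> 0 < d -> entropy_number nX nY T s <= a ->
  exists c : 'I_(2 ^ s.-1) -> Y, forall x, nX x <= 1 -> exists j, nY (T x - c j) <= (1 + d) * a.
Proof.
move=> ha hd he.
set S := [set eps : R | 0 < eps /\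
        exists c : 'I_(2 ^ (s.-1)) -> Y,
          forall x, nX x <= 1 -> exists j, nY (T x - c j) <= eps].
have hS : has_inf S.
  split; last by exists 0 => y [/ltW].
  case: hT => C hC.
  exists (`|C| + 1); split; first by rewrite ltr_wpDl.
  exists (fun _ => 0) => x hx.
  exists (Ordinal (n:=2 ^ s.-1) (m:=0) (ltac:(by rewrite expn_gt0))).
  rewrite subr0; apply: (le_trans (hC x)).
  have := hX x; have := ler_norm C; have := normr_ge0 C; nra.
have [e [e0 [c hc]] hle] := inf_adherent (mulr_gt0 hd ha) hS.
exists c => x hx; have [j hj] := hc x hx; exists j.
apply: (le_trans hj); rewrite /entropy_number -/S in he; nra.
Qed.

Lemma powR_inv_pow (x s : R) : 0 <= x -> 0 < s -> (x `^ s^-1) `^ s = x.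
Proof.
move=> hx hs; rewrite -powRrM mulVf ?powRr1 //; by rewrite (gt_eqF hs).
Qed.

Lemma lsum_bound (m : nat) (q : \bar R) (p : R) (hp : 0 < p) (hpq : (p%:E < q)%E)
  (e k : 'I_m -> R) (d : R) (hd : 0 <= d) :
  (forall i, 0 <= e i) -> (forall i, 0 <= k i) ->
  (forall i, e i <= (1 + d) * k i `^ exp_inv q) -> \sum_i k i <= 2 ->
  lsum q e <= (1 + d) * 2 `^ exp_inv q.
Proof.
move=> he hk hek hsum.
case: q hpq hek => [s| |] //= hps hek.
- have hs : 0 < s by move: hps; rewrite lte_fin; lra.
  have h1 : \sum_i e i `^ s <= (1 + d) `^ s * 2.
    apply: (@le_trans _ _ (\sum_i (1 + d) `^ s * k i)).
      apply: ler_sum => i _.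
      have := hek i => hi.
      have := @ge0_ler_powR R s (ltW hs) (e i) ((1 + d) * k i `^ s^-1).
      rewrite !nnegrE => H.
      have := H (he i) (mulr_ge0 (addr_ge0 ler01 hd) (powR_ge0 _ _)) hi.
      by rewrite powRM ?powR_inv_pow //; [lra | exact: powR_ge0].
    by rewrite -mulr_sumr ler_wpM2l // powR_ge0.
  have his : 0 <= s^-1 by rewrite invr_ge0 ltW.
  have := @ge0_ler_powR R s^-1 his (\sum_i e i `^ s) ((1 + d) `^ s * 2).
  rewrite !nnegrE => H.
  have H2 := H (sumr_ge0 _ (fun i _ => powR_ge0 _ _)) (mulr_ge0 (powR_ge0 _ _) (ler0n _ 2)) h1.
  apply: (le_trans H2).
  rewrite powRM ?powR_ge0 // -powRrM mulfV ?powRr1; [lra | lra | by rewrite (gt_eqF hs)].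
- rewrite powRr0 mulr1; apply: bigmax_le; first lra.
  by move=> i _; have := hek i; rewrite powRr0 mulr1.
Qed.


Lemma ceil_exists (y : R) : 0 <= y -> exists k : nat, y <= k%:R /\ k%:R < y + 1.
Proof.
move=> hy.
have ex : exists k : nat, (fun k : nat => y <= k%:R) k.
  by exists (Num.Def.archi_bound y); exact: ltW (archi_boundP hy).
case: (@ex_minnP (fun k : nat => y <= k%:R) ex) => k hk hmin.
exists k; split => //.
case: k hk hmin => [|k'] hk hmin; first by rewrite ltr_pwDr.
have : ~~ (y <= k'%:R) by apply/negP => h; have := hmin _ h; rewrite ltnn.
rewrite -ltNge -natr1 => h; lra.
Qed.

End A.

Theorem lemma2p3 (R : realType) (m : nat) (hm : (2 <= m)%N)
  (p : R) (q : \bar R) (hp : 0 < p) (hpq : (p%:E < q)%E)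
  (X Y : 'I_m -> lmodType R)
  (nX : forall i, X i -> R) (nY : forall i, Y i -> R)
  (hX : forall i, is_quasi_banach (nX i)) (hY : forall i, is_quasi_banach (nY i))
  (T : forall i, {linear X i -> Y i})
  (hT : forall i, bounded_op (nX i) (nY i) (T i))
  (he : forall (i : 'I_m) (s : nat), (1 <= s <= m)%N ->
          entropy_number (nX i) (nY i) (T i) s
            <= (m%:R / s%:R) `^ (p^-1 - exp_inv q)) :
  entropy_number (lp_norm nX p%:E) (lp_norm nY q) (diag_op T) (5 * m)
    <= 3 `^ exp_inv q.
Proof.
have hth0 : 0 <= exp_inv q.
  case: q hpq {he} => [s| |] //= hps.
  rewrite invr_ge0; move: hps; rewrite lte_fin; lra.
have hthp : exp_inv q < p^-1.
  case: q hpq {he hth0} => [s| |] //= hps; last by rewrite invr_gt0.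
  move: hps; rewrite lte_fin => hps; rewrite ltf_pV2 ?posrE //; lra.
set th := exp_inv q.
set al := p^-1 - th.
have hal : 0 < al by rewrite /al subr_gt0.
have hm0 : (0 < m)%N by lia.
have hmR : 0 < m%:R :> R by rewrite ltr0n.
have nX0 : forall i x, 0 <= nX i x.
  by move=> i x; case: (hX i) => [[h _ _ _] _]; exact: h.
have nXZ : forall i a x, nX i (a *: x) = `|a| * nX i x.
  by move=> i a x; case: (hX i) => [[_ _ h _] _]; exact: h.
have nXeq : forall i x, nX i x = 0 -> x = 0.
  by move=> i x; case: (hX i) => [[_ h _ _] _]; move/h.
have nY0 : forall i x, 0 <= nY i x.
  by move=> i x; case: (hY i) => [[h _ _ _] _]; exact: h.
have nYZ : forall i a x, nY i (a *: x) = `|a| * nY i x.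
  by move=> i a x; case: (hY i) => [[_ _ h _] _]; exact: h.
have nYz : forall i, nY i 0 = 0.
  by move=> i; case: (hY i) => [[_ h _ _] _]; apply/h.
apply: (@le_trans _ _ (2 `^ th)); last first.
  by apply: ge0_ler_powR => //; rewrite ?nnegrE // ler_nat.
rewrite /entropy_number.
apply: inf_le_B; first by move=> y [/ltW].
  exact: powR_gt0.
move=> d hd.
have hD : forall (i : 'I_m) (s : nat), exists D : nat -> Y i, (1 <= s <= m)%N ->
    forall x, nX i x <= 1 -> exists b, (b < 2 ^ s.-1)%N /\
      nY i (T i x - D b) <= (1 + d) * (m%:R / s%:R) `^ al.
  move=> i s; case: (boolP (1 <= s <= m)%N) => hs; last by exists (fun _ => 0).
  have ha : 0 < (m%:R / s%:R) `^ al.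
    apply: powR_gt0; apply: divr_gt0 => //; rewrite ltr0n; by case/andP: hs.
  have [c hc] := @cover_of R _ _ _ _ _ (nX0 i) (hT i) s _ d ha hd (he i s hs).
  exists (fun b => oapp c 0 (insub b)) => _ x hx.
  have [j hj] := hc x hx; exists (val j); split; first exact: ltn_ord.
  by rewrite valK.
pose D i s := sval (cid (hD i s)).
have HD : forall (i : 'I_m) (s : nat), (1 <= s <= m)%N ->
    forall x, nX i x <= 1 -> exists b, (b < 2 ^ s.-1)%N /\
      nY i (T i x - D i s b) <= (1 + d) * (m%:R / s%:R) `^ al :=
  fun i s => svalP (cid (hD i s)).
pose r (k : nat) : R := (k%:R / m%:R) `^ p^-1.
pose center (sq : seq (nat * nat)) : dprod Y := fun i : 'I_m =>
  if (nth (0, 0)%N sq i).1 == 0%N then 0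
  else r (nth (0, 0)%N sq i).1 *: D i (nth (0, 0)%N sq i).1 (nth (0, 0)%N sq i).2.
pose L := map center (Ls m m).
have hL : (size L <= 2 ^ (5 * m).-1)%N.
  rewrite size_map; apply: (leq_trans (size_Ls m m)).
  rewrite (_ : 4 = 2 ^ 2)%N // -expnM leq_exp2l //; lia.
pose c (j : 'I_(2 ^ (5 * m).-1)) : dprod Y := nth 0 L j.
exists ((1 + d) * 2 `^ th); split => //.
split; first by apply: mulr_gt0; [lra | exact: powR_gt0].
exists c => x hx.
pose t i := nX i (x i).
have ht0 i : 0 <= t i by exact: nX0.
have hsum1 : \sum_i t i `^ p <= 1.
  move: hx; rewrite /lp_norm /lsum => hx.
  have := @ge0_ler_powR R p (ltW hp) _ _ _ _ hx.
  rewrite powR_inv_pow //; last by apply: sumr_ge0 => i _; exact: powR_ge0.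
  rewrite powR1; apply; rewrite nnegrE //.
  by apply: powR_ge0.
have htp1 i : t i `^ p <= 1.
  apply: le_trans hsum1; rewrite (bigD1 i) //= lerDl.
  by apply: sumr_ge0 => j _; exact: powR_ge0.
have hk i : exists k : nat, m%:R * t i `^ p <= k%:R /\ k%:R < m%:R * t i `^ p + 1.
  apply: ceil_exists; apply: mulr_ge0; [exact: ltW | exact: powR_ge0].
pose k i := sval (cid (hk i)).
have hk1 i : m%:R * t i `^ p <= (k i)%:R := (svalP (cid (hk i))).1.
have hk2 i : (k i)%:R < m%:R * t i `^ p + 1 := (svalP (cid (hk i))).2.
have hkm i : (k i <= m)%N.
  rewrite -ltnS -(ltr_nat R) -natr1; have := hk2 i; have := htp1 i; nra.
have hk0 i : k i = 0%N -> x i = 0.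
  move=> e0; have := hk1 i; rewrite e0 => h.
  have h2 : t i `^ p = 0.
    apply/eqP; rewrite eq_le powR_ge0 andbT; nra.
  by apply: nXeq; exact: (powR_eq0_eq0 h2).
have hrid : forall kk : nat, (0 < kk)%N ->
    r kk * (m%:R / kk%:R) `^ al = (kk%:R / m%:R) `^ th.
  move=> kk hkk.
  have hkR : 0 < kk%:R :> R by rewrite ltr0n.
  have hy : 0 < kk%:R / m%:R :> R by exact: divr_gt0.
  have hinv : (m%:R / kk%:R) `^ al = ((kk%:R / m%:R) `^ al)^-1.
    apply: (@mulIf _ ((kk%:R / m%:R) `^ al)); first by rewrite gt_eqF // powR_gt0.
    rewrite mulVf ?gt_eqF ?powR_gt0 // -powRM; try lra.
    by rewrite mulrA divfK ?gt_eqF // mulfV ?gt_eqF // powR1.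
    exact: ltW (divr_gt0 hmR hkR).
  rewrite hinv -powRN /r -powRD; last by rewrite (gt_eqF hy) implybT.
  congr (_ `^ _); rewrite /al; lra.
have hb i : exists b : nat, (0 < k i)%N -> (b < 2 ^ (k i).-1)%N /\
    nY i (T i (x i) - r (k i) *: D i (k i) b) <= (1 + d) * ((k i)%:R / m%:R) `^ th.
  case: (posnP (k i)) => hki; first by exists 0%N; rewrite hki.
  have hs : (1 <= k i <= m)%N by rewrite hki hkm.
  have hr : 0 < r (k i) by apply: powR_gt0; apply: divr_gt0 => //; rewrite ltr0n.
  have htr : t i <= r (k i).
    have -> : t i = (t i `^ p) `^ p^-1 by rewrite -powRrM mulfV ?gt_eqF // powRr1.
    apply: ge0_ler_powR; rewrite ?nnegrE ?invr_ge0 ?powR_ge0 ?(ltW hp) //.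
      by apply: divr_ge0; apply: ler0n.
    by rewrite ler_pdivlMr // mulrC; exact: hk1.
  have hy : nX i ((r (k i))^-1 *: x i) <= 1.
    rewrite nXZ ger0_norm ?invr_ge0 ?(ltW hr) // -/(t i).
    by rewrite mulrC ler_pdivrMr // mul1r.
  have [b [hb1 hb2]] := HD i (k i) hs _ hy.
  exists b => _; split => //.
  have -> : T i (x i) - r (k i) *: D i (k i) b =
            r (k i) *: (T i ((r (k i))^-1 *: x i) - D i (k i) b).
    by rewrite [T i (_ *: _)]linearZ scalerBr scalerA mulfV ?gt_eqF // scale1r.
  rewrite nYZ ger0_norm ?(ltW hr) // -(hrid _ hki).
  have := nY0 i (T i ((r (k i))^-1 *: x i) - D i (k i) b).
  have : 0 < (m%:R / (k i)%:R) `^ al :> R.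
    by apply: powR_gt0; apply: divr_gt0 => //; rewrite ltr0n.
  nra.
pose b i := sval (cid (hb i)).
have Hb i : (0 < k i)%N -> (b i < 2 ^ (k i).-1)%N /\
    nY i (T i (x i) - r (k i) *: D i (k i) (b i)) <= (1 + d) * ((k i)%:R / m%:R) `^ th :=
  svalP (cid (hb i)).
pose dat (i : 'I_m) : nat * nat := if k i == 0%N then (0, 0)%N else (k i, b i).
pose sq := [seq dat i | i <- enum 'I_m].
have hnth (i : 'I_m) : nth (0, 0)%N sq i = dat i.
  by rewrite (nth_map i) ?size_enum_ord ?ltn_ord // nth_ord_enum.
have hsq : sq \in Ls m m.
  have := @mem_Ls sq m; rewrite size_map size_enum_ord; apply.
    apply/allP => y /mapP [i _ ->]; rewrite /dat.
    case: eqP => [//|/eqP hki]; rewrite /good /=; apply/orP; right.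
    have hki' : (0 < k i)%N by rewrite lt0n.
    by rewrite hki' (Hb i hki').1.
  rewrite -map_comp sumnE big_map big_enum /=.
  rewrite -(ler_nat R) natr_sum.
  apply: (@le_trans _ _ (\sum_(i in 'I_m) m%:R * t i `^ p)).
    apply: ler_sum => i _; rewrite /dat.
    case: eqP => [_|/eqP hki] /=.
      by apply: mulr_ge0; [exact: ltW | exact: powR_ge0].
    have hki' : (0 < k i)%N by rewrite lt0n.
    have := hk2 i; rewrite -(prednK hki') -natr1 /=; lra.
  rewrite -mulr_sumr -[X in _ <= X]mulr1 ler_wpM2l ?ler0n //.
have hcin : center sq \in L by apply: map_f.
have hj : (index (center sq) L < 2 ^ (5 * m).-1)%N.
  by apply: leq_trans hL; rewrite index_mem.
exists (Ordinal hj).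
have -> : c (Ordinal hj) = center sq by rewrite /c /= nth_index.
rewrite /lp_norm.
apply: (@lsum_bound R m q p hp hpq _ (fun i => (k i)%:R / m%:R) d (ltW hd)).
- by move=> i; exact: nY0.
- by move=> i /=; apply: divr_ge0; apply: ler0n.
- move=> i /=.
  have -> : (diag_op T x - center sq) i = T i (x i) - center sq i by [].
  rewrite /center hnth /dat /diag_op.
  case: (eqVneq (k i) 0%N) => hki.
    rewrite (hk0 i hki) hki /= linear0 subr0 nYz.
    by apply: mulr_ge0; [lra | exact: powR_ge0].
  have hki' : (0 < k i)%N by rewrite lt0n.
  rewrite (negbTE hki) /=.
  exact: (Hb i hki').2.
- rewrite -mulr_suml ler_pdivrMr //.
  apply: (@le_trans _ _ (\sum_i (m%:R * t i `^ p + 1))).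
    by apply: ler_sum => i _; exact: ltW (hk2 i).
  rewrite big_split /= -mulr_sumr sumr_const card_ord.
  have := hsum1; nra.
Qed.
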